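(* Let $p>1$ and $h\in C[0,\infty)$ with $h(s)>0$ for $s>0$. Assume that the equation $w''+h(s)|w|^{p-1}w=0$ has a solution $w_0$ on $[0,\infty)$ with $w_0(0)=0$ and $w_0(s)>0$ for $s>0$. Then for all sufficiently large $c>0$ the problem \[ w''+h(s)|w|^{p-1}w=0\ (0<s<c),\quad w(0)=w(c)=0,\quad w(s)>0\ (0<s<c), \] has a solution $w_1$ with $w_1'(0)>w_0'(0)$. *)

(* Defs.v *)
From Stdlib Require Import Reals.
From Coquelicot Require Import Coquelicot.
Open Scope R_scope.

Definition pnl (p w : R) : R :=
  if Req_EM_T w 0 then 0 else Rpower (Rabs w) (p - 1) * w.

Definition cont_within (D : R -> Prop) (f : R -> R) (s : R) : Prop :=
  filterlim f (within D (locally s)) (locally (f s)).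

(* (w, dw) is a classical solution of  w'' + h(s) |w|^(p-1) w = 0  with
   equation holding on the open set [Dint] and with w, w' = dw continuous up
   to the boundary on the closed set [D] (so dw s at a boundary point is the
   one-sided derivative w'(s)). *)
Definition ode_sol (p : R) (h : R -> R) (D Dint : R -> Prop) (w dw : R -> R)
  : Prop :=
  (forall s, D s -> cont_within D w s /\ cont_within D dw s) /\
  (forall s, Dint s ->
     is_derive w s (dw s) /\ is_derive dw s (- (h s * pnl p (w s)))).

(* Main.v *)
Require Import Defs.
From Stdlib Require Import Reals Lra Lia Psatz Classical.
From Coquelicot Require Import Coquelicot.
Open Scope R_scope.

Lemma lip_cont (f : R -> R) (k x : R) : 0 <= k ->
  (forall y, Rabs (f y - f x) <= k * Rabs (y - x)) -> continuous f x.
Proof.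
  intros Hk Hl. apply continuity_pt_filterlim.
  intros eps Heps. exists (eps / (k + 1)). split.
  - apply Rdiv_lt_0_compat; lra.
  - intros y [_ Hy]. simpl in *. unfold Rdist in *.
    eapply Rle_lt_trans; [apply Hl|].
    apply Rle_lt_trans with ((k+1) * Rabs (y - x)).
    + apply Rmult_le_compat_r; [apply Rabs_pos|lra].
    + apply Rlt_le_trans with ((k+1) * (eps / (k+1))).
      * apply Rmult_lt_compat_l; lra.
      * right; field; lra.
Qed.

Definition clamp (a b x : R) := Rmax a (Rmin x b).

Lemma clamp_lip a b x y : a <= b -> Rabs (clamp a b x - clamp a b y) <= Rabs (x - y).
Proof. intros. unfold clamp, Rmax, Rmin; repeat destruct Rle_dec; split_Rabs; lra. Qed.

Lemma clamp_range a b x : a <= b -> a <= clamp a b x <= b.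
Proof. intros. unfold clamp, Rmax, Rmin; repeat destruct Rle_dec; lra. Qed.

Lemma clamp_id a b x : a <= x <= b -> clamp a b x = x.
Proof. intros. unfold clamp, Rmax, Rmin; repeat destruct Rle_dec; lra. Qed.

Lemma clamp_cont a b x : a <= b -> continuous (clamp a b) x.
Proof.
  intros. apply (lip_cont _ 1); [lra|]. intros y. rewrite Rmult_1_l. apply clamp_lip; auto.
Qed.

Lemma cont_comp_within (D : R -> Prop) (g f : R -> R) (x : R) :
  (forall t, D (g t)) -> continuous g x -> cont_within D f (g x) ->
  continuous (fun t => f (g t)) x.
Proof.
  intros HD Hg Hf. unfold continuous.
  eapply filterlim_comp; [|exact Hf].
  intros P HP. unfold filtermap, within in *.
  specialize (Hg _ HP). unfold filtermap in Hg.
  eapply filter_imp; [|exact Hg]. simpl. intros t Ht. apply Ht, HD.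
Qed.

Lemma cont_within_full (D : R -> Prop) (f : R -> R) x :
  continuous f x -> cont_within D f x.
Proof.
  intros Hf. unfold cont_within. eapply filterlim_filter_le_1; [|exact Hf].
  intros P HP. unfold within. eapply filter_imp; [|exact HP]. auto.
Qed.

Lemma cont_within_interior (f : R -> R) x : 0 < x ->
  cont_within (fun y => 0 <= y) f x -> continuous f x.
Proof.
  intros Hx Hf P HP. specialize (Hf P HP). unfold filtermap, within in *.
  destruct Hf as [d Hd]. 
  assert (Hm : 0 < Rmin d x) by (apply Rmin_pos; [apply cond_pos|lra]).
  exists (mkposreal _ Hm). intros y Hy. apply Hd.
  - eapply Rlt_le_trans; [exact Hy|]. simpl. apply Rmin_l.
  - change (Rabs (y - x) < Rmin d x) in Hy. 
    assert (Rabs (y - x) < x) by (eapply Rlt_le_trans; [exact Hy| apply Rmin_r]).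
    split_Rabs; lra.
Qed.

Lemma at_right_point (P : R -> Prop) (a b : R) : a < b -> at_right a P ->
  exists y, a < y < b /\ P y.
Proof.
  intros Hab [d Hd]. exists (a + Rmin (d/2) ((b - a)/2)).
  assert (0 < d) by apply cond_pos.
  assert (Rmin (d/2) ((b-a)/2) <= d/2) by apply Rmin_l.
  assert (Rmin (d/2) ((b-a)/2) <= (b-a)/2) by apply Rmin_r.
  assert (0 < Rmin (d/2) ((b-a)/2)) by (apply Rmin_pos; lra).
  split; [lra|]. apply Hd; [|lra].
  change (Rabs (a + Rmin (d / 2) ((b - a) / 2) - a) < d).
  rewrite Rabs_right; lra.
Qed.

Lemma le_lim_right (g : R -> R) (x l a0 s : R) : a0 < s ->
  (forall a, a0 < a < s -> x <= g a) -> filterlim g (at_right a0) (locally l) -> x <= l.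
Proof.
  intros Hs Hg Hl. destruct (Rle_dec x l) as [|Hn]; auto. exfalso.
  assert (He : 0 < x - l) by lra.
  pose proof (proj1 (filterlim_locally g l) Hl (mkposreal _ He)) as H.
  destruct (at_right_point _ _ _ Hs H) as [y [Hy Hb]].
  specialize (Hg y Hy). change (Rabs (g y - l) < x - l) in Hb. split_Rabs; lra.
Qed.

Lemma ge_lim_right (g : R -> R) (x l a0 s : R) : a0 < s ->
  (forall a, a0 < a < s -> g a <= x) -> filterlim g (at_right a0) (locally l) -> l <= x.
Proof.
  intros Hs Hg Hl. destruct (Rle_dec l x) as [|Hn]; auto. exfalso.
  assert (He : 0 < l - x) by lra.
  pose proof (proj1 (filterlim_locally g l) Hl (mkposreal _ He)) as H.
  destruct (at_right_point _ _ _ Hs H) as [y [Hy Hb]].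
  specialize (Hg y Hy). change (Rabs (g y - l) < l - x) in Hb. split_Rabs; lra.
Qed.

Lemma at_right_le_within0 (f : R -> R) :
  cont_within (fun x => 0 <= x) f 0 -> filterlim f (at_right 0) (locally (f 0)).
Proof.
  intros Hf. eapply filterlim_filter_le_1; [|exact Hf].
  intros P [d Hd]. exists d. intros y Hy Hpos. apply Hd; auto. lra.
Qed.

Lemma mvt_open (f df : R -> R) (a b : R) : a < b ->
  (forall x, a < x < b -> is_derive f x (df x)) ->
  (forall x, a <= x <= b -> continuous f x) ->
  exists c, a < c < b /\ f b - f a = df c * (b - a).
Proof.
  intros Hab Hd Hc.
  pose (pr1 := fun c (P : a < c < b) =>
     exist (fun l => derivable_pt_lim f c l) (df c) (proj1 (is_derive_Reals _ _ _) (Hd c P))).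
  pose (pr2 := fun c (P : a < c < b) =>
     exist (fun l => derivable_pt_lim id c l) 1 (derivable_pt_lim_id c)).
  destruct (MVT f id a b pr1 pr2 Hab) as [c [P HP]].
  - intros x Hx. apply continuity_pt_filterlim, Hc; auto.
  - intros x Hx. apply derivable_continuous_pt, derivable_pt_id.
  - exists c. split; auto. simpl in HP. unfold id in HP. lra.
Qed.

Lemma nonincr (f df : R -> R) (a b : R) : a <= b ->
  (forall x, a < x < b -> is_derive f x (df x) /\ df x <= 0) ->
  (forall x, a <= x <= b -> continuous f x) -> f b <= f a.
Proof.
  intros Hab Hd Hc. destruct (Req_dec a b) as [->|Hne]; [lra|].
  destruct (mvt_open f df a b) as [c [Hc1 Hc2]]; try lra; auto.
  - intros x Hx; apply Hd; auto.
  - assert (df c <= 0) by (apply Hd; auto). nra.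
Qed.


Definition qf (p y : R) := y * Rpower y (p - 1).

Lemma Rpower_pos x e : 0 < Rpower x e.
Proof. unfold Rpower. apply exp_pos. Qed.

Lemma qf_0 p : qf p 0 = 0.
Proof. unfold qf. ring. Qed.

Lemma qf_Rpower p y : 0 < y -> qf p y = Rpower y p.
Proof.
  intros Hy. unfold qf. replace p with (1 + (p - 1)) at 2 by ring.
  rewrite Rpower_plus, Rpower_1; auto.
Qed.

Lemma qf_pnl p y : 0 < y -> qf p y = pnl p y.
Proof.
  intros Hy. unfold qf, pnl. destruct (Req_EM_T y 0); [lra|].
  rewrite Rabs_right by lra. ring.
Qed.

Lemma qf_nonneg p y : 0 <= y -> 0 <= qf p y.
Proof. intros. unfold qf. pose proof (Rpower_pos y (p-1)). nra. Qed.

Lemma qf_posv p y : 0 < y -> 0 < qf p y.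
Proof. intros. unfold qf. pose proof (Rpower_pos y (p-1)). nra. Qed.

Lemma qf_mono p x y : 1 <= p -> 0 <= x <= y -> qf p x <= qf p y.
Proof.
  intros Hp [Hx Hxy]. destruct (Req_dec x 0) as [->|Hx0].
  - rewrite qf_0. apply qf_nonneg; lra.
  - unfold qf. assert (Rpower x (p-1) <= Rpower y (p-1)) by (apply Rle_Rpower_l; lra).
    pose proof (Rpower_pos x (p-1)). nra.
Qed.

Lemma qf_lip p K x y : 1 < p -> 0 < K -> 0 <= x <= y -> y <= K ->
  qf p y - qf p x <= p * Rpower K (p - 1) * (y - x).
Proof.
  intros Hp HK [Hx Hxy] HyK. pose proof (Rpower_pos K (p-1)) as HRK.
  destruct (Req_dec x 0) as [->|Hx0].
  - rewrite qf_0. unfold qf. destruct (Req_dec y 0) as [->|Hy0]; [nra|].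
    assert (Rpower y (p-1) <= Rpower K (p-1)) by (apply Rle_Rpower_l; lra).
    assert (y * Rpower y (p-1) <= y * Rpower K (p-1)) by (apply Rmult_le_compat_l; lra).
    assert (y * Rpower K (p-1) <= p * Rpower K (p-1) * y) by (rewrite (Rmult_comm p), Rmult_assoc, (Rmult_comm y); apply Rmult_le_compat_l; nra).
    lra.
  - destruct (Req_dec x y) as [<-|Hne]; [nra|].
    destruct (mvt_open (fun t => Rpower t p) (fun t => p * Rpower t (p - 1)) x y) as [c [Hc Hc2]].
    + lra.
    + intros t Ht. apply is_derive_Reals, derivable_pt_lim_power. lra.
    + intros t Ht. apply continuity_pt_filterlim, derivable_continuous_pt.
      exists (p * Rpower t (p - 1)). apply derivable_pt_lim_power. lra.
    + rewrite !qf_Rpower by lra. rewrite Hc2.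
      assert (Rpower c (p-1) <= Rpower K (p-1)) by (apply Rle_Rpower_l; lra).
      apply Rmult_le_compat_r; [lra|]. apply Rmult_le_compat_l; lra.
Qed.

Definition Gf (p K w : R) := qf p (clamp 0 K w).

Lemma Gf_lip p K a b : 1 < p -> 0 < K ->
  Rabs (Gf p K a - Gf p K b) <= p * Rpower K (p - 1) * Rabs (a - b).
Proof.
  intros Hp HK. unfold Gf.
  pose proof (clamp_range 0 K a) as Ha. pose proof (clamp_range 0 K b) as Hb.
  pose proof (clamp_lip 0 K a b) as Hl.
  pose proof (Rpower_pos K (p-1)).
  set (x := clamp 0 K a) in *. set (y := clamp 0 K b) in *.
  apply Rle_trans with (p * Rpower K (p - 1) * Rabs (x - y)).
  2: { apply Rmult_le_compat_l; [nra|]. apply Hl; lra. }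
  destruct (Rle_dec x y).
  - pose proof (qf_lip p K x y Hp HK ltac:(lra) ltac:(lra)).
    pose proof (qf_mono p x y ltac:(lra) ltac:(lra)).
    rewrite Rabs_left1 by lra. rewrite (Rabs_left1 (x - y)) by lra. lra.
  - pose proof (qf_lip p K y x Hp HK ltac:(lra) ltac:(lra)).
    pose proof (qf_mono p y x ltac:(lra) ltac:(lra)).
    rewrite Rabs_right by lra. rewrite (Rabs_right (x - y)) by lra. lra.
Qed.

Lemma Gf_nonneg p K a : 0 < K -> 0 <= Gf p K a.
Proof. intros. unfold Gf. apply qf_nonneg. apply clamp_range. lra. Qed.

Lemma Gf_pnl p K a : 0 < a <= K -> Gf p K a = pnl p a.
Proof. intros. unfold Gf. rewrite clamp_id by lra. apply qf_pnl. lra. Qed.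

Lemma Gf_cont p K x : 1 < p -> 0 < K -> continuous (Gf p K) x.
Proof.
  intros. apply (lip_cont _ (p * Rpower K (p - 1))).
  - pose proof (Rpower_pos K (p-1)). nra.
  - intros y. apply Gf_lip; auto.
Qed.


Lemma d_mult (f g : R -> R) x df dg : is_derive f x df -> is_derive g x dg ->
  is_derive (fun t => f t * g t) x (df * g x + f x * dg).
Proof. intros H1 H2. exact (is_derive_mult f g x df dg H1 H2 Rmult_comm). Qed.

Lemma d_plus (f g : R -> R) x df dg : is_derive f x df -> is_derive g x dg ->
  is_derive (fun t => f t + g t) x (df + dg).
Proof. intros H1 H2. exact (is_derive_plus f g x df dg H1 H2). Qed.

Lemma d_minus (f g : R -> R) x df dg : is_derive f x df -> is_derive g x dg ->
  is_derive (fun t => f t - g t) x (df - dg).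
Proof. intros H1 H2. exact (is_derive_minus f g x df dg H1 H2). Qed.

Lemma d_ext (f : R -> R) x l l' : l = l' -> is_derive f x l -> is_derive f x l'.
Proof. intros ->; auto. Qed.

Lemma d_cont (f : R -> R) x l : is_derive f x l -> continuous f x.
Proof. intros H. apply continuity_pt_filterlim, derivable_continuous_pt. exists l. apply is_derive_Reals; auto. Qed.

Lemma d_expk k x : is_derive (fun s => exp (- (k * s))) x (- k * exp (- (k * x))).
Proof.
  pose proof (is_derive_comp exp (fun s => - (k * s)) x (exp (- (k * x))) (-k)) as H.
  apply (d_ext _ _ (scal (-k) (exp (- (k * x))))). { reflexivity. }
  apply H. apply is_derive_exp.
  assert (H2 : is_derive (fun s => - (k * s)) x (- (k * 1))).
  { apply (is_derive_opp (fun s => k * s)). apply is_derive_scal. apply (is_derive_id x). }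
  replace (-k) with (- (k * 1)) by ring. exact H2.
Qed.

Lemma filterlim_right_mult (f g : R -> R) a lf lg :
  filterlim f (at_right a) (locally lf) -> filterlim g (at_right a) (locally lg) ->
  filterlim (fun t => f t * g t) (at_right a) (locally (lf * lg)).
Proof.
  intros Hf Hg. eapply filterlim_comp_2; [exact Hf|exact Hg|].
  apply (filterlim_mult lf lg).
Qed.

Lemma cont_at_right (f : R -> R) a : continuous f a -> filterlim f (at_right a) (locally (f a)).
Proof.
  intros Hf. eapply filterlim_filter_le_1; [|exact Hf].
  intros P [d Hd]. exists d. intros y Hy _. apply Hd; auto.
Qed.

Lemma gronwall (psi dpsi : R -> R) (k T : R) :
  (forall s, 0 < s < T -> is_derive psi s (dpsi s) /\ dpsi s <= k * psi s) ->
  filterlim psi (at_right 0) (locally (psi 0)) ->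
  forall s, 0 <= s < T -> psi s <= psi 0 * exp (k * s).
Proof.
  intros Hd H0 s Hs.
  set (Phi := fun t => psi t * exp (- (k * t))).
  assert (Hmon : forall a b, 0 < a <= b -> b < T -> Phi b <= Phi a).
  { intros a b Hab HbT.
    apply (nonincr Phi (fun t => dpsi t * exp (- (k * t)) + psi t * (- k * exp (- (k * t))))).
    - lra.
    - intros x Hx. destruct (Hd x ltac:(lra)) as [Hx1 Hx2]. split.
      + apply (d_mult psi (fun t => exp (- (k * t)))); auto. apply d_expk.
      + pose proof (exp_pos (- (k * x))). nra.
    - intros x Hx. apply (d_cont _ _ (dpsi x * exp (- (k * x)) + psi x * (- k * exp (- (k * x))))).
      apply (d_mult psi (fun t => exp (- (k * t)))); [apply Hd; lra|apply d_expk]. }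
  destruct (Req_dec s 0) as [->|Hs0].
  - rewrite Rmult_0_r, exp_0. lra.
  - assert (HP : Phi s <= psi 0).
    { apply (le_lim_right Phi (Phi s) (psi 0) 0 s); [lra| |].
      - intros a Ha. apply Hmon; lra.
      - replace (psi 0) with (psi 0 * exp (- (k * 0))) by (rewrite Rmult_0_r, Ropp_0, exp_0; ring).
        apply filterlim_right_mult; auto.
        apply (cont_at_right (fun t => exp (- (k * t)))).
        apply (d_cont _ _ _ (d_expk k 0)). }
    unfold Phi in HP.
    assert (E : exp (- (k * s)) * exp (k * s) = 1) by (rewrite <- exp_plus; replace (- (k * s) + k * s) with 0 by ring; apply exp_0).
    pose proof (exp_pos (k * s)).
    replace (psi s) with (psi s * exp (- (k * s)) * exp (k * s)) by (rewrite Rmult_assoc, E; ring).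
    apply Rmult_le_compat_r; lra.
Qed.


Definition cont_all (f : R -> R) := forall x, continuous f x.

Lemma ca_ex f a b : cont_all f -> ex_RInt f a b.
Proof. intros Hf. apply (ex_RInt_continuous (V:=R_CompleteNormedModule)). intros; apply Hf. Qed.

Lemma ca_plus f g : cont_all f -> cont_all g -> cont_all (fun t => f t + g t).
Proof. intros Hf Hg x. apply (continuous_plus f g x); auto. Qed.
Lemma ca_minus f g : cont_all f -> cont_all g -> cont_all (fun t => f t - g t).
Proof. intros Hf Hg x. apply (continuous_minus f g x); auto. Qed.
Lemma ca_mult f g : cont_all f -> cont_all g -> cont_all (fun t => f t * g t).
Proof. intros Hf Hg x. apply (continuous_mult f g x); auto. Qed.
Lemma ca_const c : cont_all (fun _ => c).
Proof. intros x. apply continuous_const. Qed.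
Lemma ca_id : cont_all (fun t => t).
Proof. intros x. apply continuous_id. Qed.
Lemma ca_abs f : cont_all f -> cont_all (fun t => Rabs (f t)).
Proof. intros Hf x. apply continuous_Rabs_comp; auto. Qed.
Lemma ca_comp f g : cont_all f -> cont_all g -> cont_all (fun t => f (g t)).
Proof. intros Hf Hg x. apply (continuous_comp g f); auto. Qed.

Lemma RInt_deriv f x : cont_all f -> is_derive (fun s => RInt f 0 s) x (f x).
Proof.
  intros Hf. apply (is_derive_RInt f (RInt f 0) 0 x); [|apply Hf].
  apply filter_forall. intros b. apply (RInt_correct (V:=R_CompleteNormedModule)), ca_ex; auto.
Qed.

Lemma ca_RInt f : cont_all f -> cont_all (fun s => RInt f 0 s).
Proof. intros Hf x. apply (d_cont _ _ (f x)). apply RInt_deriv; auto. Qed.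

Lemma RInt_scal_R f c a b : cont_all f -> RInt (fun t => c * f t) a b = c * RInt f a b.
Proof. intros Hf. apply (RInt_scal f a b c). apply ca_ex; auto. Qed.

Lemma RInt_minus_R f g a b : cont_all f -> cont_all g ->
  RInt (fun t => f t - g t) a b = RInt f a b - RInt g a b.
Proof. intros Hf Hg. apply (RInt_minus f g a b); apply ca_ex; auto. Qed.

Lemma RInt_const_R c a b : RInt (fun _ => c) a b = c * (b - a).
Proof. rewrite RInt_const. simpl. unfold scal; simpl; unfold mult; simpl. ring. Qed.

Lemma RInt_abs_bound f g s : cont_all f -> cont_all g -> 0 <= s ->
  (forall t, 0 < t < s -> Rabs (f t) <= g t) -> Rabs (RInt f 0 s) <= RInt g 0 s.
Proof.
  intros Hf Hg Hs Hb. eapply Rle_trans; [apply abs_RInt_le; auto; apply ca_ex; auto|].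
  apply RInt_le; auto; try apply ca_ex; auto. apply ca_abs; auto.
Qed.

Lemma RInt_le_R f g s : cont_all f -> cont_all g -> 0 <= s ->
  (forall t, 0 < t < s -> f t <= g t) -> RInt f 0 s <= RInt g 0 s.
Proof. intros Hf Hg Hs Hb. apply RInt_le; auto; apply ca_ex; auto. Qed.

Lemma ca_pow n : cont_all (fun t => t ^ n).
Proof.
  induction n. - simpl. apply ca_const. - simpl. apply ca_mult; auto. apply ca_id.
Qed.

Lemma RInt_pow n s : RInt (fun t => t ^ n) 0 s = s ^ (S n) / INR (S n).
Proof.
  apply is_RInt_unique.
  assert (HN : INR (S n) <> 0) by (apply not_0_INR; lia).
  assert (H := is_RInt_derive (fun t => t ^ (S n) / INR (S n)) (fun t => t ^ n) 0 s).
  replace (s ^ S n / INR (S n)) with (minus (s ^ S n / INR (S n)) (0 ^ S n / INR (S n))).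
  2:{ simpl. unfold minus, plus, opp; simpl. field. auto. }
  apply H.
  - intros x _.
    assert (Hd : is_derive (fun t => / INR (S n) * t ^ S n) x (/ INR (S n) * (INR (S n) * 1 * x ^ Init.Nat.pred (S n)))).
    { apply is_derive_scal. apply is_derive_pow. apply (is_derive_id x). }
    apply (is_derive_ext (K:=R_AbsRing) (V:=R_NormedModule) (fun t => / INR (S n) * t ^ S n)); [intros; unfold Rdiv; simpl; ring|].
    eapply d_ext; [|exact Hd]. simpl. field. auto.
  - intros x _. apply ca_pow.
Qed.

Lemma RInt_ext_R (f g : R -> R) a b : (forall x, Rmin a b < x < Rmax a b -> f x = g x) ->
  RInt f a b = RInt g a b.
Proof. apply (RInt_ext (V:=R_CompleteNormedModule)). Qed.

Lemma kernel_id f s : cont_all f ->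
  s * RInt f 0 s - RInt (fun t => t * f t) 0 s = RInt (fun t => (s - t) * f t) 0 s.
Proof.
  intros Hf.
  rewrite (RInt_ext_R (fun t => (s - t) * f t) (fun t => s * f t - t * f t)) by (intros; ring).
  rewrite RInt_minus_R. rewrite RInt_scal_R; auto.
  - apply ca_mult; auto. apply ca_const.
  - apply ca_mult; auto. apply ca_id.
Qed.


Section Picard.
Variables (H G : R -> R) (T Hb Lg Gb : R).
Hypothesis HT : 0 < T.
Hypothesis HHc : cont_all H.
Hypothesis HHb : forall x, 0 <= H x <= Hb.
Hypothesis HGc : cont_all G.
Hypothesis HGl : forall a b, Rabs (G a - G b) <= Lg * Rabs (a - b).
Hypothesis HLg : 0 <= Lg.
Hypothesis HGb : forall a, 0 <= G a <= Gb.

Definition cl s := clamp 0 T s.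
Definition Fc (u : R -> R) t := H t * G (u t).
Definition Phi lam (u : R -> R) s :=
  lam * cl s - (cl s * RInt (Fc u) 0 (cl s) - RInt (fun t => t * Fc u t) 0 (cl s)).

Lemma Hb_nn : 0 <= Hb. Proof. pose proof (HHb 0); lra. Qed.
Lemma Gb_nn : 0 <= Gb. Proof. pose proof (HGb 0); lra. Qed.

Lemma cl_range s : 0 <= cl s <= T.
Proof. apply clamp_range; lra. Qed.
Lemma cl_id s : 0 <= s <= T -> cl s = s.
Proof. apply clamp_id. Qed.
Lemma cl_cl s : cl (cl s) = cl s.
Proof. apply cl_id, cl_range. Qed.
Lemma ca_cl : cont_all cl.
Proof. intros x. apply clamp_cont; lra. Qed.

Lemma Fc_ca u : cont_all u -> cont_all (Fc u).
Proof. intros Hu. apply ca_mult; auto. apply ca_comp; auto. Qed.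

Lemma Fc_bound u t : 0 <= Fc u t <= Hb * Gb.
Proof.
  unfold Fc. pose proof (HHb t). pose proof (HGb (u t)). split; [nra|].
  apply Rmult_le_compat; lra.
Qed.

Lemma Fc_lip u v t : Rabs (Fc u t - Fc v t) <= Hb * Lg * Rabs (u t - v t).
Proof.
  unfold Fc. rewrite <- Rmult_minus_distr_l, Rabs_mult, Rmult_assoc.
  pose proof (HHb t). rewrite Rabs_right by lra.
  apply Rmult_le_compat; try lra. apply Rabs_pos. apply HGl.
Qed.

Lemma Phi_ca lam u : cont_all u -> cont_all (Phi lam u).
Proof.
  intros Hu. unfold Phi.
  apply (ca_comp (fun s => lam * s - (s * RInt (Fc u) 0 s - RInt (fun t => t * Fc u t) 0 s)) cl); [|apply ca_cl].
  apply ca_minus. apply ca_mult; [apply ca_const|apply ca_id].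
  apply ca_minus. apply ca_mult; [apply ca_id|]. apply ca_RInt, Fc_ca; auto.
  apply ca_RInt. apply ca_mult; [apply ca_id|apply Fc_ca; auto].
Qed.

Lemma Phi_cl lam u s : Phi lam u (cl s) = Phi lam u s.
Proof. unfold Phi. rewrite cl_cl. reflexivity. Qed.

Lemma Phi_alt lam u s : cont_all u ->
  Phi lam u s = lam * cl s - RInt (fun t => (cl s - t) * Fc u t) 0 (cl s).
Proof. intros Hu. unfold Phi. rewrite kernel_id; auto. apply Fc_ca; auto. Qed.

Lemma Phi_diff lam u v s : cont_all u -> cont_all v ->
  Rabs (Phi lam u s - Phi lam v s) <= T * (Hb * Lg) * RInt (fun t => Rabs (u t - v t)) 0 (cl s).
Proof.
  intros Hu Hv. rewrite !Phi_alt; auto.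
  pose proof (cl_range s) as Hs.
  assert (Hk : forall w, cont_all w -> cont_all (fun t => (cl s - t) * Fc w t)).
  { intros w Hw. apply ca_mult; [apply ca_minus; [apply ca_const|apply ca_id]|apply Fc_ca; auto]. }
  replace (lam * cl s - RInt (fun t => (cl s - t) * Fc u t) 0 (cl s) -
     (lam * cl s - RInt (fun t => (cl s - t) * Fc v t) 0 (cl s)))
    with (RInt (fun t => (cl s - t) * Fc v t) 0 (cl s) - RInt (fun t => (cl s - t) * Fc u t) 0 (cl s)) by ring.
  rewrite <- RInt_minus_R by auto.
  rewrite <- RInt_scal_R by (apply ca_abs, ca_minus; auto).
  apply RInt_abs_bound; try lra.
  - apply ca_minus; auto.
  - apply ca_mult; [apply ca_const|apply ca_abs, ca_minus; auto].
  - intros t Ht. rewrite <- Rmult_minus_distr_l, Rabs_mult.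
    rewrite Rabs_right by lra.
    assert (A : Rabs (Fc v t - Fc u t) <= Hb * Lg * Rabs (u t - v t)) by (rewrite Rabs_minus_sym; apply Fc_lip).
    pose proof (Rabs_pos (Fc v t - Fc u t)).
    apply Rle_trans with (T * Rabs (Fc v t - Fc u t)).
    + apply Rmult_le_compat_r; lra.
    + rewrite Rmult_assoc. apply Rmult_le_compat_l; lra.
Qed.

Lemma Phi0_bound lam u s : cont_all u -> Rabs (Phi lam u s - lam * cl s) <= T * T * (Hb * Gb).
Proof.
  intros Hu. rewrite Phi_alt by auto. pose proof (cl_range s) as Hs.
  replace (lam * cl s - RInt (fun t => (cl s - t) * Fc u t) 0 (cl s) - lam * cl s)
    with (- RInt (fun t => (cl s - t) * Fc u t) 0 (cl s)) by ring.
  rewrite Rabs_Ropp.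
  apply Rle_trans with (RInt (fun _ => T * (Hb * Gb)) 0 (cl s)).
  - apply RInt_abs_bound; try lra.
    + apply ca_mult; [apply ca_minus; [apply ca_const|apply ca_id]|apply Fc_ca; auto].
    + apply ca_const.
    + intros t Ht. rewrite Rabs_mult, Rabs_right by lra. pose proof (Fc_bound u t).
      rewrite Rabs_right by lra. apply Rmult_le_compat; lra.
  - rewrite RInt_const_R. pose proof Hb_nn. pose proof Gb_nn.
    assert (0 <= T * (Hb * Gb)) by (apply Rmult_le_pos; [lra|apply Rmult_le_pos; lra]).
    apply Rle_trans with (T * (Hb * Gb) * T); [apply Rmult_le_compat_l; lra|right; ring].
Qed.

Definition pic lam n := Nat.iter n (Phi lam) (fun s => lam * cl s).

Lemma pic_ca lam n : cont_all (pic lam n).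
Proof.
  induction n.
  - change (pic lam 0) with (fun s => lam * cl s). apply ca_mult; [apply ca_const|apply ca_cl].
  - change (pic lam (S n)) with (Phi lam (pic lam n)). apply Phi_ca; exact IHn.
Qed.

Lemma pic_cl lam n s : pic lam n (cl s) = pic lam n s.
Proof. destruct n. - change (lam * cl (cl s) = lam * cl s). rewrite cl_cl; auto.
  - change (Phi lam (pic lam n) (cl s) = Phi lam (pic lam n) s). apply Phi_cl. Qed.

Lemma pic_diff lam n s : Rabs (pic lam (S n) s - pic lam n s) <=
  T * T * (Hb * Gb) * ((T * (Hb * Lg)) * cl s) ^ n / INR (Factorial.fact n).
Proof.
  revert s. induction n; intros s.
  - simpl. replace (T * T * (Hb * Gb) * 1 / 1) with (T * T * (Hb * Gb)) by field.
    apply Phi0_bound. exact (pic_ca lam 0).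
  - change (pic lam (S (S n)) s) with (Phi lam (pic lam (S n)) s).
    change (pic lam (S n) s) with (Phi lam (pic lam n) s).
    eapply Rle_trans; [apply Phi_diff; apply pic_ca|].
    set (B0 := T * T * (Hb * Gb)). set (c1 := T * (Hb * Lg)).
    pose proof (cl_range s) as Hs. pose proof Hb_nn. pose proof Gb_nn.
    assert (Hc1 : 0 <= c1) by (unfold c1; apply Rmult_le_pos; [lra|apply Rmult_le_pos; lra]).
    apply Rle_trans with (c1 * RInt (fun t => (B0 * c1 ^ n / INR (Factorial.fact n)) * t ^ n) 0 (cl s)).
    + apply Rmult_le_compat_l; auto.
      apply RInt_le_R; try lra.
      * apply ca_abs, ca_minus; apply pic_ca.
      * apply ca_mult; [apply ca_const|apply ca_pow].
      * intros t Ht. eapply Rle_trans; [apply IHn|]. rewrite cl_id by lra.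
        right. rewrite Rpow_mult_distr. unfold Rdiv, B0, c1. ring.
    + rewrite (RInt_scal_R (fun t => t ^ n) (B0 * c1 ^ n / INR (Factorial.fact n))) by apply ca_pow. rewrite RInt_pow.
      rewrite fact_simpl, mult_INR, S_INR. change ((c1 * cl s) ^ S n) with (c1 * cl s * (c1 * cl s) ^ n). change (cl s ^ S n) with (cl s * cl s ^ n). rewrite Rpow_mult_distr.
      pose proof (INR_fact_neq_0 n). pose proof (pos_INR n).
      right. field. split; auto. lra.
Qed.

Lemma pic_diff_u lam n s : Rabs (pic lam (S n) s - pic lam n s) <=
  T * T * (Hb * Gb) * ((T * (Hb * Lg)) * T) ^ n / INR (Factorial.fact n).
Proof.
  eapply Rle_trans; [apply pic_diff|].
  pose proof (cl_range s) as Hs. pose proof Hb_nn. pose proof Gb_nn.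
  assert (Hc1 : 0 <= T * (Hb * Lg)) by (apply Rmult_le_pos; [lra|apply Rmult_le_pos; lra]).
  assert (0 <= T * T * (Hb * Gb)) by (apply Rmult_le_pos; [nra|apply Rmult_le_pos; lra]).
  unfold Rdiv. apply Rmult_le_compat_r. 
  { left. apply Rinv_0_lt_compat. apply INR_fact_lt_0. }
  apply Rmult_le_compat_l; auto. apply pow_incr. split; [apply Rmult_le_pos; lra|].
  apply Rmult_le_compat_l; lra.
Qed.

Definition aa := T * (Hb * Lg) * T.
Definition B0 := T * T * (Hb * Gb).
Definition term k := B0 * aa ^ k / INR (Factorial.fact k).
Fixpoint ps n := match n with O => 0 | S n => ps n + term n end.

Lemma aa_nn : 0 <= aa.
Proof. unfold aa. pose proof Hb_nn. assert (0 <= Hb * Lg) by (apply Rmult_le_pos; lra).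
  apply Rmult_le_pos; [apply Rmult_le_pos|]; lra. Qed.
Lemma B0_nn : 0 <= B0.
Proof. unfold B0. pose proof Hb_nn. pose proof Gb_nn. assert (0 <= Hb * Gb) by (apply Rmult_le_pos; lra).
  apply Rmult_le_pos; [apply Rmult_le_pos|]; lra. Qed.
Lemma term_nn k : 0 <= term k.
Proof. unfold term. pose proof B0_nn. pose proof aa_nn. unfold Rdiv.
  apply Rmult_le_pos; [apply Rmult_le_pos; auto; apply pow_le; auto|].
  left; apply Rinv_0_lt_compat, INR_fact_lt_0. Qed.

Lemma ps_mono n k : ps n <= ps (k + n).
Proof. induction k; simpl; auto. lra. pose proof (term_nn (k + n)). lra. Qed.

Lemma pic_cauchy lam n k s : Rabs (pic lam (k + n) s - pic lam n s) <= ps (k + n) - ps n.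
Proof.
  induction k.
  - simpl. rewrite Rminus_diag, Rabs_R0. lra.
  - change (S k + n)%nat with (S (k + n)). simpl ps.
    replace (pic lam (S (k + n)) s - pic lam n s) with
      ((pic lam (S (k + n)) s - pic lam (k + n) s) + (pic lam (k + n) s - pic lam n s)) by ring.
    eapply Rle_trans; [apply Rabs_triang|].
    pose proof (pic_diff_u lam (k + n) s). unfold term at 1. fold aa in H0. fold B0 in H0. lra.
Qed.

Definition EE := B0 * exp aa.

Lemma ps_lim : is_lim_seq ps EE.
Proof.
  apply is_lim_seq_incr_1.
  assert (Hl : exp_in aa (exp aa)) by exact (proj2_sig (exist_exp aa)).
  assert (Hs : forall n, ps (S n) = B0 * sum_f_R0 (fun i => / INR (Factorial.fact i) * aa ^ i) n).
  { induction n.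
    - simpl. unfold term. simpl. field.
    - change (ps (S (S n))) with (ps (S n) + term (S n)). rewrite IHn, tech5. unfold term, Rdiv. ring. }
  apply (is_lim_seq_ext (fun n => B0 * sum_f_R0 (fun i => / INR (Factorial.fact i) * aa ^ i) n)).
  { intros n; rewrite Hs; auto. }
  apply (is_lim_seq_scal_l _ B0 (exp aa)). apply is_lim_seq_Reals. exact Hl.
Qed.

Lemma ps_le_E n : ps n <= EE.
Proof.
  assert (H1 : is_lim_seq (fun k => ps (k + n)) EE) by (apply is_lim_seq_incr_n, ps_lim).
  pose proof (is_lim_seq_le (fun _ => ps n) (fun k => ps (k + n)) (ps n) EE (ps_mono n)
    (is_lim_seq_const _) H1). simpl in H0. auto.
Qed.

Lemma eps_small eps : 0 < eps -> exists N, EE - ps N < eps.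
Proof.
  intros He. pose proof (proj2 (is_lim_seq_spec ps EE) ps_lim (mkposreal _ He)) as [N HN].
  exists N. specialize (HN N (le_n N)). simpl in HN. split_Rabs; lra.
Qed.

Lemma ps_diff_mono n : EE - ps (S n) <= EE - ps n.
Proof. simpl. pose proof (term_nn n). lra. Qed.

Definition usol lam s := real (Lim_seq (fun n => pic lam n s)).

Lemma usol_lim lam s : is_lim_seq (fun n => pic lam n s) (usol lam s).
Proof.
  assert (Hex : ex_finite_lim_seq (fun n => pic lam n s)).
  { apply ex_lim_seq_cauchy_corr. intros eps.
    assert (Hps : ex_finite_lim_seq ps) by (exists EE; apply ps_lim).
    destruct (proj1 (ex_lim_seq_cauchy_corr ps) Hps eps) as [N HN].
    exists N. intros n m Hn Hm.
    destruct (Compare_dec.le_lt_dec n m) as [Hnm|Hnm].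
    - replace m with ((m - n) + n)%nat by lia.
      rewrite Rabs_minus_sym. eapply Rle_lt_trans; [apply pic_cauchy|].
      specialize (HN n ((m - n) + n)%nat Hn ltac:(lia)).
      pose proof (ps_mono n (m - n)). split_Rabs; lra.
    - replace n with ((n - m) + m)%nat by lia.
      eapply Rle_lt_trans; [apply pic_cauchy|].
      specialize (HN ((n - m) + m)%nat m ltac:(lia) Hm).
      pose proof (ps_mono m (n - m)). split_Rabs; lra. }
  destruct Hex as [l Hl]. unfold usol. rewrite (is_lim_seq_unique _ _ Hl). simpl. exact Hl.
Qed.

Lemma usol_unif lam n s : Rabs (usol lam s - pic lam n s) <= EE - ps n.
Proof.
  assert (H1 : is_lim_seq (fun k => Rabs (pic lam (k + n) s - pic lam n s)) (Rabs (usol lam s - pic lam n s))).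
  { apply (is_lim_seq_abs _ (usol lam s - pic lam n s)).
    apply is_lim_seq_minus'; [|apply is_lim_seq_const].
    apply (is_lim_seq_incr_n (fun k => pic lam k s)). apply usol_lim. }
  assert (H2 : is_lim_seq (fun k => ps (k + n) - ps n) (EE - ps n)).
  { apply is_lim_seq_minus'; [|apply is_lim_seq_const]. apply is_lim_seq_incr_n, ps_lim. }
  pose proof (is_lim_seq_le _ _ _ _ (fun k => pic_cauchy lam n k s) H1 H2). simpl in H0. auto.
Qed.

Lemma usol_ca lam : cont_all (usol lam).
Proof.
  intros x. apply continuity_pt_filterlim. intros eps Heps.
  destruct (eps_small (eps / 3)) as [N HN]; [lra|].
  pose proof (pic_ca lam N x) as Hc. apply continuity_pt_filterlim in Hc.
  destruct (Hc (eps / 3) ltac:(lra)) as [alp [Halp Hd]].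
  exists alp. split; auto. intros y Hy. specialize (Hd y Hy). simpl in *. unfold Rdist in *.
  pose proof (usol_unif lam N y). pose proof (usol_unif lam N x).
  replace (usol lam y - usol lam x) with
    ((usol lam y - pic lam N y) + (pic lam N y - pic lam N x) - (usol lam x - pic lam N x)) by ring.
  eapply Rle_lt_trans; [apply Rabs_triang|]. rewrite Rabs_Ropp.
  eapply Rle_lt_trans; [apply Rplus_le_compat_r, Rabs_triang|]. lra.
Qed.

Lemma usol_fix lam s : usol lam s = Phi lam (usol lam) s.
Proof.
  set (u := usol lam).
  assert (Hbd : forall n, Rabs (u s - Phi lam u s) <= (1 + aa) * (EE - ps n)).
  { intros n.
    replace (u s - Phi lam u s) with ((u s - pic lam (S n) s) + (Phi lam (pic lam n) s - Phi lam u s))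
      by (change (pic lam (S n) s) with (Phi lam (pic lam n) s); ring).
    eapply Rle_trans; [apply Rabs_triang|].
    pose proof (usol_unif lam (S n) s). pose proof (ps_diff_mono n).
    assert (Hn0 : 0 <= EE - ps n) by (pose proof (ps_le_E n); lra).
    pose proof (Phi_diff lam (pic lam n) u s (pic_ca lam n) (usol_ca lam)).
    assert (HI : RInt (fun t => Rabs (pic lam n t - u t)) 0 (cl s) <= (EE - ps n) * T).
    { pose proof (cl_range s).
      apply Rle_trans with (RInt (fun _ => EE - ps n) 0 (cl s)).
      - apply RInt_le_R; try lra.
        + apply ca_abs, ca_minus; [apply pic_ca|apply usol_ca].
        + apply ca_const.
        + intros t _. rewrite Rabs_minus_sym. apply usol_unif.
      - rewrite RInt_const_R. apply Rmult_le_compat_l; lra. }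
    assert (Hc1 : 0 <= T * (Hb * Lg)) by (pose proof Hb_nn; apply Rmult_le_pos; [lra|apply Rmult_le_pos; lra]).
    assert (T * (Hb * Lg) * RInt (fun t => Rabs (pic lam n t - u t)) 0 (cl s) <= aa * (EE - ps n)).
    { unfold aa. apply Rle_trans with (T * (Hb * Lg) * ((EE - ps n) * T)).
      - apply Rmult_le_compat_l; auto.
      - right; ring. }
    fold u in H0. lra. }
  destruct (Req_dec (u s - Phi lam u s) 0) as [E|Hne]; [lra|].
  exfalso. pose proof (Rabs_pos_lt _ Hne) as Hd. pose proof aa_nn.
  destruct (eps_small (Rabs (u s - Phi lam u s) / (1 + aa))) as [N HN].
  { apply Rdiv_lt_0_compat; lra. }
  specialize (Hbd N).
  assert ((1 + aa) * (EE - ps N) < Rabs (u s - Phi lam u s)).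
  { apply Rmult_lt_reg_l with (/ (1 + aa)). apply Rinv_0_lt_compat; lra.
    rewrite <- Rmult_assoc, Rinv_l, Rmult_1_l by lra. rewrite Rmult_comm. exact HN. }
  lra.
Qed.

Lemma loc_cl s : 0 < s < T -> locally s (fun t => cl t = t).
Proof.
  intros Hs. apply (locally_interval _ s 0 T); simpl; try lra.
  intros y Hy1 Hy2. apply cl_id. lra.
Qed.

Definition dusol lam s := lam - RInt (Fc (usol lam)) 0 (cl s).

Lemma dusol_ca lam : cont_all (dusol lam).
Proof.
  unfold dusol. apply ca_minus; [apply ca_const|].
  apply (ca_comp (fun s => RInt (Fc (usol lam)) 0 s) cl); [|apply ca_cl].
  apply ca_RInt, Fc_ca, usol_ca.
Qed.

Lemma usol_0 lam : usol lam 0 = 0.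
Proof.
  rewrite usol_fix. unfold Phi. rewrite cl_id by lra. rewrite !RInt_point. simpl. 
  unfold zero; simpl. ring.
Qed.

Lemma dusol_0 lam : dusol lam 0 = lam.
Proof. unfold dusol. rewrite cl_id by lra. rewrite RInt_point. unfold zero; simpl. ring. Qed.

Lemma usol_deriv lam s : 0 < s < T ->
  is_derive (usol lam) s (dusol lam s) /\
  is_derive (dusol lam) s (- (H s * G (usol lam s))).
Proof.
  intros Hs. set (u := usol lam).
  assert (HF : cont_all (Fc u)) by (apply Fc_ca, usol_ca).
  assert (HtF : cont_all (fun t => t * Fc u t)) by (apply ca_mult; [apply ca_id|auto]).
  split.
  - apply (is_derive_ext_loc (fun t => lam * t - (t * RInt (Fc u) 0 t - RInt (fun t => t * Fc u t) 0 t))).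
    + eapply filter_imp; [|apply (loc_cl s Hs)]. simpl. intros t Ht.
      unfold u. rewrite usol_fix. unfold Phi. rewrite Ht. reflexivity.
    + unfold dusol. rewrite cl_id by lra.
      eapply d_ext; [|apply d_minus; [apply is_derive_scal, (is_derive_id s)|
          apply d_minus; [apply d_mult; [apply (is_derive_id s)|apply RInt_deriv; auto]|apply RInt_deriv; auto]]].
      fold u. change (lam * 1 - (1 * RInt (Fc u) 0 s + s * Fc u s - s * Fc u s) = lam - RInt (Fc u) 0 s). ring.
  - apply (is_derive_ext_loc (fun t => lam - RInt (Fc u) 0 t)).
    + eapply filter_imp; [|apply (loc_cl s Hs)]. simpl. intros t Ht.
      unfold dusol. rewrite Ht. reflexivity.
    + eapply d_ext; [|apply d_minus; [apply (is_derive_const lam s)|apply RInt_deriv; auto]].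
      unfold Fc, zero; simpl. ring.
Qed.

End Picard.


Lemma filterlim_right_plus (f g : R -> R) a lf lg :
  filterlim f (at_right a) (locally lf) -> filterlim g (at_right a) (locally lg) ->
  filterlim (fun t => f t + g t) (at_right a) (locally (lf + lg)).
Proof.
  intros Hf Hg. eapply filterlim_comp_2; [exact Hf|exact Hg|].
  apply (filterlim_plus lf lg).
Qed.

Section W0.
Variables (p : R) (h : R -> R) (w0 dw0 : R -> R).
Hypothesis Hp : 1 < p.
Hypothesis Hh_pos : forall s, 0 < s -> 0 < h s.
Hypothesis Hw0 : ode_sol p h (fun s => 0 <= s) (fun s => 0 < s) w0 dw0.
Hypothesis Hw00 : w0 0 = 0.
Hypothesis Hw0pos : forall s, 0 < s -> 0 < w0 s.

Lemma w0_d s : 0 < s -> is_derive w0 s (dw0 s).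
Proof. intros. apply (proj2 Hw0); auto. Qed.
Lemma dw0_d s : 0 < s -> is_derive dw0 s (- (h s * pnl p (w0 s))).
Proof. intros. apply (proj2 Hw0); auto. Qed.
Lemma dw0_neg s : 0 < s -> - (h s * pnl p (w0 s)) <= 0.
Proof.
  intros Hs. rewrite <- qf_pnl by auto. pose proof (qf_posv p (w0 s) (Hw0pos s Hs)).
  pose proof (Hh_pos s Hs). nra.
Qed.
Lemma w0_r : filterlim w0 (at_right 0) (locally (w0 0)).
Proof. apply at_right_le_within0. apply (proj1 Hw0). lra. Qed.
Lemma dw0_r : filterlim dw0 (at_right 0) (locally (dw0 0)).
Proof. apply at_right_le_within0. apply (proj1 Hw0). lra. Qed.

Lemma dw0_mono a b : 0 < a <= b -> dw0 b <= dw0 a.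
Proof.
  intros Hab. apply (nonincr dw0 (fun s => - (h s * pnl p (w0 s)))); try lra.
  - intros x Hx. split; [apply dw0_d|apply dw0_neg]; lra.
  - intros x Hx. eapply d_cont. apply dw0_d. lra.
Qed.

Lemma dw0_le b : 0 < b -> dw0 b <= dw0 0.
Proof.
  intros Hb. apply (le_lim_right dw0 (dw0 b) (dw0 0) 0 b); auto.
  - intros a Ha. apply dw0_mono. lra.
  - apply dw0_r.
Qed.

Lemma w0_le s : 0 < s -> w0 s <= dw0 0 * s.
Proof.
  intros Hs.
  apply (le_lim_right (fun a => w0 a + dw0 0 * (s - a)) (w0 s) (dw0 0 * s) 0 s); auto.
  - intros a Ha. destruct (mvt_open w0 dw0 a s) as [xi [Hxi Hm]]; try lra.
    + intros x Hx. apply w0_d. lra.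
    + intros x Hx. eapply d_cont. apply w0_d. lra.
    + pose proof (dw0_le xi ltac:(lra)). nra.
  - assert (E : dw0 0 * s = w0 0 + dw0 0 * (s - 0)). { rewrite Hw00. rewrite Rminus_0_r, Rplus_0_l. reflexivity. } rewrite E.
    apply filterlim_right_plus. apply w0_r.
    apply (cont_at_right (fun a => dw0 0 * (s - a))).
    apply (lip_cont _ (Rabs (dw0 0))). apply Rabs_pos. intros y.
    rewrite <- Rabs_mult, <- (Rabs_Ropp (_ * (y - _))). right. f_equal. ring.
Qed.

Lemma lam0_pos : 0 < dw0 0.
Proof. pose proof (w0_le 1 ltac:(lra)). pose proof (Hw0pos 1 ltac:(lra)). lra. Qed.

End W0.

Lemma filterlim_right_minus (f g : R -> R) a lf lg :
  filterlim f (at_right a) (locally lf) -> filterlim g (at_right a) (locally lg) ->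
  filterlim (fun t => f t - g t) (at_right a) (locally (lf - lg)).
Proof.
  intros Hf Hg. apply (filterlim_right_plus f (fun t => - g t)); auto.
  eapply filterlim_comp; [exact Hg|]. apply (filterlim_opp lg).
Qed.


Section Main.
Variables (p : R) (h : R -> R) (w0 dw0 : R -> R).
Hypothesis Hp : 1 < p.
Hypothesis Hh_cont : forall s, 0 <= s -> cont_within (fun x => 0 <= x) h s.
Hypothesis Hh_pos : forall s, 0 < s -> 0 < h s.
Hypothesis Hw0 : ode_sol p h (fun s => 0 <= s) (fun s => 0 < s) w0 dw0.
Hypothesis Hw00 : w0 0 = 0.
Hypothesis Hw0pos : forall s, 0 < s -> 0 < w0 s.
Variable c : R.
Hypothesis Hc : 3 < c.

Definition TT := c + 1.
Definition HH t := Rabs (h (clamp 0 TT t)).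
Variables (Hb m : R).
Hypothesis HHb : forall x, 0 <= HH x <= Hb.
Hypothesis Hm : 0 < m.
Hypothesis Hmh : forall x, 1 <= x <= 2 -> m <= h x.

Definition lam0 := dw0 0.
Definition XX := 6 * Rpower (7 / m) (/ (p - 1)).
Definition LL := Rmax (Rmax lam0 (XX + 1)) (2 * XX * Hb * qf p XX + 1).
Definition KK := LL * TT.
Definition GG := Gf p KK.
Definition LgK := p * Rpower KK (p - 1).
Definition GbK := qf p KK.

Lemma TT_pos : 0 < TT. Proof. unfold TT; lra. Qed.
Lemma XX_pos : 0 < XX. Proof. unfold XX. pose proof (Rpower_pos (7/m) (/ (p-1))). lra. Qed.
Lemma LL_ge : lam0 <= LL /\ XX + 1 <= LL /\ 2 * XX * Hb * qf p XX + 1 <= LL.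
Proof.
  unfold LL. pose proof (Rmax_l (Rmax lam0 (XX + 1)) (2 * XX * Hb * qf p XX + 1)).
  pose proof (Rmax_r (Rmax lam0 (XX + 1)) (2 * XX * Hb * qf p XX + 1)).
  pose proof (Rmax_l lam0 (XX + 1)). pose proof (Rmax_r lam0 (XX + 1)). lra.
Qed.
Lemma KK_pos : 0 < KK.
Proof. unfold KK. pose proof LL_ge. pose proof XX_pos. pose proof TT_pos. nra. Qed.

Lemma HH_ca : cont_all HH.
Proof.
  apply ca_abs. intros x. apply (cont_comp_within (fun x => 0 <= x)).
  - intros t. apply clamp_range. pose proof TT_pos; lra.
  - apply clamp_cont. pose proof TT_pos; lra.
  - apply Hh_cont. apply clamp_range. pose proof TT_pos; lra.
Qed.

Lemma HH_h s : 0 < s <= TT -> HH s = h s.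
Proof. intros Hs. unfold HH. rewrite clamp_id by lra. apply Rabs_right. pose proof (Hh_pos s). lra. Qed.

Lemma GG_ca : cont_all GG.
Proof. intros x. apply Gf_cont; auto. apply KK_pos. Qed.
Lemma GG_lip a b : Rabs (GG a - GG b) <= LgK * Rabs (a - b).
Proof. apply Gf_lip; auto. apply KK_pos. Qed.
Lemma LgK_nn : 0 <= LgK.
Proof. unfold LgK. pose proof (Rpower_pos KK (p-1)). nra. Qed.
Lemma GG_b a : 0 <= GG a <= GbK.
Proof.
  pose proof KK_pos. split. apply Gf_nonneg; auto.
  unfold GG, Gf, GbK. apply qf_mono; [lra|]. apply clamp_range. lra.
Qed.
Lemma GG_pnl a : 0 < a <= KK -> GG a = pnl p a.
Proof. apply Gf_pnl. Qed.
Lemma GG_q a : 0 < a <= KK -> GG a = qf p a.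
Proof. intros. unfold GG, Gf. rewrite clamp_id by lra. auto. Qed.

Definition U lam := usol HH GG TT lam.
Definition dU lam := dusol HH GG TT lam.

Lemma U_ca lam : cont_all (U lam).
Proof. exact (usol_ca HH GG TT Hb LgK GbK TT_pos HH_ca HHb GG_ca GG_lip LgK_nn GG_b lam). Qed.
Lemma dU_ca lam : cont_all (dU lam).
Proof. exact (dusol_ca HH GG TT Hb LgK GbK TT_pos HH_ca HHb GG_ca GG_lip LgK_nn GG_b lam). Qed.
Lemma U_d lam s : 0 < s < TT -> is_derive (U lam) s (dU lam s).
Proof. intros Hs. exact (proj1 (usol_deriv HH GG TT Hb LgK GbK TT_pos HH_ca HHb GG_ca GG_lip LgK_nn GG_b lam s Hs)). Qed.
Lemma dU_d lam s : 0 < s < TT -> is_derive (dU lam) s (- (HH s * GG (U lam s))).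
Proof. intros Hs. exact (proj2 (usol_deriv HH GG TT Hb LgK GbK TT_pos HH_ca HHb GG_ca GG_lip LgK_nn GG_b lam s Hs)). Qed.
Lemma U_0 lam : U lam 0 = 0.
Proof. exact (usol_0 HH GG TT Hb LgK GbK TT_pos HH_ca HHb GG_ca GG_lip LgK_nn GG_b lam). Qed.
Lemma dU_0 lam : dU lam 0 = lam.
Proof. exact (dusol_0 HH GG TT TT_pos lam). Qed.

Definition MM := Hb * GbK + 1.
Lemma MM_pos : 0 < MM.
Proof. unfold MM. pose proof (HHb 0). pose proof (GG_b 0). assert (0 <= Hb * GbK) by (apply Rmult_le_pos; lra). lra. Qed.
Lemma F_b lam s : 0 <= HH s * GG (U lam s) <= MM.
Proof.
  pose proof (HHb s). pose proof (GG_b (U lam s)). unfold MM. split; [nra|].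
  assert (HH s * GG (U lam s) <= Hb * GbK) by (apply Rmult_le_compat; lra). lra.
Qed.

Lemma dU_mono lam a b : 0 <= a <= b -> b <= TT -> dU lam b <= dU lam a.
Proof.
  intros Hab HbT. apply (nonincr (dU lam) (fun s => - (HH s * GG (U lam s)))); try lra.
  - intros x Hx. split; [apply dU_d; lra|]. pose proof (F_b lam x). lra.
  - intros x _. apply dU_ca.
Qed.

Lemma U_le lam s : 0 <= s <= TT -> U lam s <= lam * s.
Proof.
  intros Hs. destruct (Req_dec s 0) as [->|Hs0]; [rewrite U_0; lra|].
  destruct (mvt_open (U lam) (dU lam) 0 s) as [xi [Hxi HM]]; try lra.
  - intros x Hx; apply U_d; lra.
  - intros x _; apply U_ca.
  - rewrite U_0 in HM. pose proof (dU_mono lam 0 xi ltac:(lra) ltac:(lra)). rewrite dU_0 in H. nra.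
Qed.

Lemma dU_ge lam s : 0 <= s <= TT -> lam - MM * s <= dU lam s.
Proof.
  intros Hs. destruct (Req_dec s 0) as [->|Hs0]; [rewrite dU_0; lra|].
  destruct (mvt_open (dU lam) (fun s => - (HH s * GG (U lam s))) 0 s) as [xi [Hxi HM]]; try lra.
  - intros x Hx; apply dU_d; lra.
  - intros x _; apply dU_ca.
  - rewrite dU_0 in HM. pose proof (F_b lam xi). nra.
Qed.

Lemma U_ge lam s : 0 <= s <= TT -> (lam - MM * s) * s <= U lam s.
Proof.
  intros Hs. destruct (Req_dec s 0) as [->|Hs0]; [rewrite U_0; lra|].
  destruct (mvt_open (U lam) (dU lam) 0 s) as [xi [Hxi HM]]; try lra.
  - intros x Hx; apply U_d; lra.
  - intros x _; apply U_ca.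
  - rewrite U_0 in HM. pose proof (dU_ge lam xi ltac:(lra)) as Hd. pose proof MM_pos.
    assert ((lam - MM * xi) * s <= dU lam xi * s) by (apply Rmult_le_compat_r; lra).
    assert (0 <= MM * (s - xi) * s) by (apply Rmult_le_pos; [apply Rmult_le_pos|]; lra). nra.
Qed.

Lemma chord lam a x b : 0 <= a < x -> x < b <= TT ->
  (U lam b - U lam x) * (x - a) <= (U lam x - U lam a) * (b - x).
Proof.
  intros Hax Hxb.
  destruct (mvt_open (U lam) (dU lam) a x) as [x1 [Hx1 HM1]]; try lra.
  - intros y Hy; apply U_d; lra.
  - intros y _; apply U_ca.
  - destruct (mvt_open (U lam) (dU lam) x b) as [x2 [Hx2 HM2]]; try lra.
    + intros y Hy; apply U_d; lra.
    + intros y _; apply U_ca.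
    + rewrite HM1, HM2. pose proof (dU_mono lam x1 x2 ltac:(lra) ltac:(lra)).
      assert (0 < (b - x) * (x - a)) by nra. nra.
Qed.

Lemma exp_le_R x y : x <= y -> exp x <= exp y.
Proof. intros [H|H]. left; apply exp_increasing; auto. subst; lra. Qed.

Definition kk := 1 + Hb * LgK.
Definition EXP := exp (kk * TT).
Lemma kk_nn : 0 <= kk.
Proof. unfold kk. pose proof (HHb 0). pose proof LgK_nn. assert (0 <= Hb * LgK) by (apply Rmult_le_pos; lra). lra. Qed.
Lemma EXP_ge1 : 1 <= EXP.
Proof. unfold EXP. pose proof (exp_ineq1_le (kk * TT)). pose proof kk_nn. pose proof TT_pos. nra. Qed.

Lemma pair_bound (u1 du1 u2 du2 : R -> R) :
  (forall t, 0 < t < TT -> is_derive u1 t (du1 t) /\ is_derive du1 t (- (HH t * GG (u1 t))) /\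
                          is_derive u2 t (du2 t) /\ is_derive du2 t (- (HH t * GG (u2 t)))) ->
  filterlim (fun t => (u1 t - u2 t) * (u1 t - u2 t) + (du1 t - du2 t) * (du1 t - du2 t))
    (at_right 0) (locally ((u1 0 - u2 0) * (u1 0 - u2 0) + (du1 0 - du2 0) * (du1 0 - du2 0))) ->
  forall s, 0 <= s < TT ->
  (u1 s - u2 s) * (u1 s - u2 s) <=
    ((u1 0 - u2 0) * (u1 0 - u2 0) + (du1 0 - du2 0) * (du1 0 - du2 0)) * EXP.
Proof.
  intros Hd Hr s Hs.
  set (psi := fun t => (u1 t - u2 t) * (u1 t - u2 t) + (du1 t - du2 t) * (du1 t - du2 t)).
  assert (Hg := gronwall psi
    (fun t => ((du1 t - du2 t) * (u1 t - u2 t) + (u1 t - u2 t) * (du1 t - du2 t)) +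
              ((- (HH t * GG (u1 t)) - - (HH t * GG (u2 t))) * (du1 t - du2 t) +
               (du1 t - du2 t) * (- (HH t * GG (u1 t)) - - (HH t * GG (u2 t))))) kk TT).
  assert (H1 : psi s <= psi 0 * exp (kk * s)).
  { apply Hg; auto. intros t Ht. destruct (Hd t Ht) as [D1 [D2 [D3 D4]]]. split.
    - unfold psi. apply (d_plus (fun t => (u1 t - u2 t) * (u1 t - u2 t)) (fun t => (du1 t - du2 t) * (du1 t - du2 t))).
      + apply (d_mult (fun t => u1 t - u2 t) (fun t => u1 t - u2 t)); apply d_minus; auto.
      + apply (d_mult (fun t => du1 t - du2 t) (fun t => du1 t - du2 t)); apply d_minus; auto.
    - set (a := u1 t - u2 t). set (b := du1 t - du2 t).
      set (d := HH t * GG (u1 t) - HH t * GG (u2 t)).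
      assert (Hdd : Rabs d <= Hb * LgK * Rabs a).
      { unfold d, a. rewrite <- Rmult_minus_distr_l, Rabs_mult. pose proof (HHb t).
        rewrite Rabs_right by lra. rewrite Rmult_assoc.
        apply Rmult_le_compat; try lra. apply Rabs_pos. apply GG_lip. }
      replace ((- (HH t * GG (u1 t)) - - (HH t * GG (u2 t))) * b + b * (- (HH t * GG (u1 t)) - - (HH t * GG (u2 t))))
        with (- 2 * (b * d)) by (unfold d; ring).
      unfold psi. fold a b. unfold kk.
      assert (E1 : - (b * d) <= Rabs b * Rabs d) by (rewrite <- Rabs_mult; rewrite <- Rabs_Ropp; apply Rle_abs).
      assert (E2 : Rabs b * Rabs d <= Rabs b * (Hb * LgK * Rabs a)) by (apply Rmult_le_compat_l; auto; apply Rabs_pos).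
      assert (E3 : 2 * (Rabs a * Rabs b) <= a * a + b * b).
      { pose proof (Rabs_pos a); pose proof (Rabs_pos b).
        assert (Rabs a * Rabs a = a * a) by (rewrite <- Rabs_mult; apply Rabs_right; apply Rle_ge, Rle_0_sqr).
        assert (Rabs b * Rabs b = b * b) by (rewrite <- Rabs_mult; apply Rabs_right; apply Rle_ge, Rle_0_sqr). pose proof (Rle_0_sqr (Rabs a - Rabs b)). unfold Rsqr in *. lra. }
      assert (E4 : 2 * (b * a) <= a * a + b * b) by (pose proof (Rle_0_sqr (a - b)); unfold Rsqr in *; lra).
      assert (HL : 0 <= Hb * LgK) by (pose proof (HHb 0); pose proof LgK_nn; apply Rmult_le_pos; lra).
      assert (E5 : Hb * LgK * (2 * (Rabs a * Rabs b)) <= Hb * LgK * (a * a + b * b)) by (apply Rmult_le_compat_l; auto).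
      lra.
    }
  unfold psi in H1.
  pose proof (exp_le_R (kk * s) (kk * TT) ltac:(apply Rmult_le_compat_l; [apply kk_nn|lra])).
  assert (0 <= (du1 s - du2 s) * (du1 s - du2 s)) by apply Rle_0_sqr.
  assert (0 <= (u1 0 - u2 0) * (u1 0 - u2 0) + (du1 0 - du2 0) * (du1 0 - du2 0)) by (apply Rplus_le_le_0_compat; apply Rle_0_sqr).
  unfold EXP. 
  assert (((u1 0 - u2 0) * (u1 0 - u2 0) + (du1 0 - du2 0) * (du1 0 - du2 0)) * exp (kk * s) <=
          ((u1 0 - u2 0) * (u1 0 - u2 0) + (du1 0 - du2 0) * (du1 0 - du2 0)) * exp (kk * TT))
    by (apply Rmult_le_compat_l; auto).
  lra.
Qed.

Lemma U_close lam mu s : 0 <= s < TT -> (U lam s - U mu s) * (U lam s - U mu s) <= (lam - mu) * (lam - mu) * EXP.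
Proof.
  intros Hs.
  assert (E : (lam - mu) * (lam - mu) = (U lam 0 - U mu 0) * (U lam 0 - U mu 0) + (dU lam 0 - dU mu 0) * (dU lam 0 - dU mu 0)).
  { rewrite (U_0 lam), (U_0 mu), (dU_0 lam), (dU_0 mu). ring. }
  rewrite E.
  apply (pair_bound (U lam) (dU lam) (U mu) (dU mu)).
  - intros t Ht. split; [apply U_d; exact Ht|]. split; [apply dU_d; exact Ht|].
    split; [apply U_d; exact Ht|apply dU_d; exact Ht].
  - apply (cont_at_right (fun t => (U lam t - U mu t) * (U lam t - U mu t) + (dU lam t - dU mu t) * (dU lam t - dU mu t))).
    pose proof (U_ca lam); pose proof (U_ca mu); pose proof (dU_ca lam); pose proof (dU_ca mu).
    apply ca_plus; apply ca_mult; apply ca_minus; assumption.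
  - exact Hs.
Qed.

Lemma w0_K t : 0 < t <= TT -> 0 < w0 t <= KK.
Proof.
  intros Ht. split; [apply Hw0pos; lra|].
  pose proof (w0_le p h w0 dw0 Hh_pos Hw0 Hw00 Hw0pos t ltac:(lra)).
  pose proof (lam0_pos p h w0 dw0 Hh_pos Hw0 Hw00 Hw0pos).
  pose proof LL_ge. fold lam0 in H, H0. unfold KK.
  assert (lam0 * t <= LL * TT) by (apply Rmult_le_compat; lra). lra.
Qed.


Lemma w0_U s : 0 <= s < TT -> w0 s = U lam0 s.
Proof.
  intros Hs.
  pose proof (pair_bound w0 dw0 (U lam0) (dU lam0)) as P.
  assert (E0 : (w0 0 - U lam0 0) * (w0 0 - U lam0 0) + (dw0 0 - dU lam0 0) * (dw0 0 - dU lam0 0) = 0)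
    by (rewrite Hw00, (U_0 lam0), (dU_0 lam0); unfold lam0; ring).
  assert (Hq : (w0 s - U lam0 s) * (w0 s - U lam0 s) <= 0 * EXP).
  { rewrite <- E0. apply P; auto.
    - intros t Ht. split; [|split; [|split]].
      + apply (w0_d p h w0 dw0 Hw0). lra.
      + rewrite HH_h by lra. rewrite GG_pnl by (apply w0_K; lra). apply (dw0_d p h w0 dw0 Hw0). lra.
      + apply U_d; auto.
      + apply dU_d; auto.
    - assert (A1 : filterlim (fun t => w0 t - U lam0 t) (at_right 0) (locally (w0 0 - U lam0 0))).
      { apply filterlim_right_minus. apply (w0_r p h w0 dw0 Hw0). apply cont_at_right, U_ca. }
      assert (A2 : filterlim (fun t => dw0 t - dU lam0 t) (at_right 0) (locally (dw0 0 - dU lam0 0))).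
      { apply filterlim_right_minus. apply (dw0_r p h w0 dw0 Hw0). apply cont_at_right, dU_ca. }
      apply filterlim_right_plus; apply filterlim_right_mult; auto. }
  rewrite Rmult_0_l in Hq. pose proof (Rle_0_sqr (w0 s - U lam0 s)). unfold Rsqr in *.
  assert (E : (w0 s - U lam0 s) * (w0 s - U lam0 s) = 0) by lra.
  apply Rmult_integral in E. lra.
Qed.

Lemma TT_c : c < TT. Proof. unfold TT; lra. Qed.

Lemma XX_pow : Rpower (XX / 6) (p - 1) = 7 / m.
Proof.
  unfold XX. replace (6 * Rpower (7 / m) (/ (p - 1)) / 6) with (Rpower (7 / m) (/ (p - 1))) by field.
  rewrite Rpower_mult. replace (/ (p - 1) * (p - 1)) with 1 by (field; lra).
  apply Rpower_1. apply Rdiv_lt_0_compat; lra.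
Qed.

Lemma large : ~ (forall s, 0 < s <= c -> 0 < U LL s).
Proof.
  intros Hpos.
  pose proof LL_ge as [HL1 [HL2 HL3]]. pose proof XX_pos as HX. pose proof TT_c as HTc.
  set (u := U LL). set (du := dU LL).
  set (qX := qf p XX).
  assert (HqX : 0 <= qX) by (apply qf_nonneg; lra).
  assert (HHb0 : 0 <= Hb) by (pose proof (HHb 0); lra).
  assert (HLpos : 0 < LL) by lra.
  set (d := XX / LL).
  assert (Hd : d * LL = XX) by (unfold d; field; lra).
  assert (Hd0 : 0 < d) by (unfold d; apply Rdiv_lt_0_compat; lra).
  assert (Hd1 : d < 1).
  { apply Rmult_lt_reg_r with LL; auto. rewrite Hd. lra. }
  assert (HKK : LL <= KK) by (unfold KK, TT; nra).
  assert (Fa : forall t, 0 < t <= d -> HH t * GG (u t) <= Hb * qX).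
  { intros t Ht. pose proof (U_le LL t ltac:(unfold TT; lra)). fold u in H.
    assert (Hut : 0 < u t) by (apply Hpos; lra).
    assert (u t <= XX) by (assert (LL * t <= LL * d) by (apply Rmult_le_compat_l; lra); nra).
    rewrite GG_q by lra. pose proof (HHb t).
    apply Rmult_le_compat; try lra. apply qf_nonneg; lra. apply qf_mono; lra. }
  assert (Fb : forall e, 0 < e <= d -> LL / 2 <= du e).
  { intros e He. destruct (mvt_open du (fun s => - (HH s * GG (U LL s))) 0 e) as [xi [Hxi HM]]; try lra.
    - intros x Hx. apply dU_d. unfold TT; lra.
    - intros x _. apply dU_ca.
    - unfold du in HM. rewrite dU_0 in HM. fold du in HM. fold u in HM.
      pose proof (Fa xi ltac:(lra)). pose proof (F_b LL xi). fold u in H0.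
      assert (HH xi * GG (u xi) * e <= Hb * qX * d) by (apply Rmult_le_compat; lra).
      assert (Hb * qX * d <= LL / 2).
      { apply Rmult_le_reg_r with LL; auto. rewrite Rmult_assoc, Hd.
        assert (0 <= LL * (LL - 1)) by (apply Rmult_le_pos; lra). fold qX in HL3. lra. }
      lra. }
  assert (Fc0 : XX / 2 <= u d).
  { destruct (mvt_open u du 0 d) as [xi [Hxi HM]]; try lra.
    - intros x Hx. apply U_d. unfold TT; lra.
    - intros x _. apply U_ca.
    - unfold u in HM. rewrite U_0 in HM. fold u in HM. pose proof (Fb xi ltac:(lra)).
      assert (LL / 2 * d <= du xi * (d - 0)) by (apply Rmult_le_compat; lra). nra. }
  assert (Hc1 : 0 < u c) by (apply Hpos; lra).
  assert (Fd : XX / 3 <= u 1).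
  { pose proof (chord LL d 1 c ltac:(lra) ltac:(unfold TT; lra)) as Ch. fold u in Ch.
    assert (0 < u 1) by (apply Hpos; lra).
    assert (u 1 * (c - d) >= u d * (c - 1)) by nra.
    assert (u d * (c - 1) >= XX / 2 * (c - 1)) by nra.
    nra. }
  set (u1 := u 1) in *.
  assert (Hu1 : 0 < u1) by lra.
  assert (Fe : forall x, 1 <= x <= 2 -> u1 / 2 <= u x).
  { intros x Hx. destruct (Req_dec x 1) as [->|Hx1]; [change (u 1) with u1; lra|].
    pose proof (chord LL 1 x c ltac:(lra) ltac:(unfold TT; lra)) as Ch. fold u in Ch. fold u1 in Ch.
    assert (0 < u x) by (apply Hpos; lra).
    assert (u x * (c - 1) >= u1 * (c - x)) by nra.
    assert (u1 * (c - x) >= u1 * (c - 2)) by nra.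
    nra. }
  assert (Ff : du 1 <= u1).
  { destruct (mvt_open u du 0 1) as [xi [Hxi HM]]; try lra.
    - intros x Hx. apply U_d. unfold TT; lra.
    - intros x _. apply U_ca.
    - unfold u in HM. rewrite U_0 in HM. fold u in HM. fold u1 in HM.
      pose proof (dU_mono LL xi 1 ltac:(lra) ltac:(unfold TT; lra)). fold du in H. lra. }
  assert (Fg : u 2 - u1 <= du 1).
  { destruct (mvt_open u du 1 2) as [xi [Hxi HM]]; try lra.
    - intros x Hx. apply U_d. unfold TT; lra.
    - intros x _. apply U_ca.
    - fold u1 in HM. pose proof (dU_mono LL 1 xi ltac:(lra) ltac:(unfold TT; lra)). fold du in H. lra. }
  assert (Fh : - u 2 <= du 2).
  { destruct (mvt_open u du 2 c) as [xi [Hxi HM]]; try lra.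
    - intros x Hx. apply U_d. unfold TT; lra.
    - intros x _. apply U_ca.
    - pose proof (dU_mono LL 2 xi ltac:(lra) ltac:(unfold TT; lra)). fold du in H.
      assert (0 < u 2) by (apply Hpos; lra).
      assert (du xi * (c - 2) <= du 2 * (c - 2)) by (apply Rmult_le_compat_r; lra).
      destruct (Rle_dec 0 (du 2)); [lra|]. nra. }
  assert (Fi : m * qf p (u1 / 2) <= du 1 - du 2).
  { destruct (mvt_open du (fun s => - (HH s * GG (U LL s))) 1 2) as [xi [Hxi HM]]; try lra.
    - intros x Hx. apply dU_d. unfold TT; lra.
    - intros x _. apply dU_ca.
    - fold u in HM.
      assert (Hux : 0 < u xi <= KK).
      { split. apply Hpos; lra. pose proof (U_le LL xi ltac:(unfold TT; lra)). fold u in H.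
        unfold KK. assert (LL * xi <= LL * TT) by (apply Rmult_le_compat_l; unfold TT; lra). lra. }
      rewrite HH_h in HM by (unfold TT; lra). rewrite GG_q in HM by lra.
      pose proof (Fe xi ltac:(lra)). pose proof (Hmh xi ltac:(lra)).
      assert (qf p (u1 / 2) <= qf p (u xi)) by (apply qf_mono; lra).
      assert (0 <= qf p (u1 / 2)) by (apply qf_nonneg; lra).
      assert (m * qf p (u1 / 2) <= h xi * qf p (u xi)) by (apply Rmult_le_compat; lra).
      lra. }
  assert (Fj : u1 / 2 * (7 / m) <= qf p (u1 / 2)).
  { unfold qf. rewrite <- XX_pow. apply Rmult_le_compat_l; [lra|].
    apply Rle_Rpower_l; lra. }
  assert (m * (u1 / 2 * (7 / m)) = 7 / 2 * u1) by (field; lra).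
  assert (m * (u1 / 2 * (7 / m)) <= m * qf p (u1 / 2)) by (apply Rmult_le_compat_l; lra).
  lra.
Qed.

Definition Pos lam := forall s, 0 < s <= c -> 0 < U lam s.

Lemma close_lt lam mu s d : 0 <= s < TT -> 0 < d -> Rabs (lam - mu) <= d / (EXP + 1) ->
  Rabs (U lam s - U mu s) < d.
Proof.
  intros Hs Hd Hl. pose proof (U_close lam mu s Hs) as Hc2. pose proof EXP_ge1.
  set (e := d / (EXP + 1)) in *.
  assert (He : e * (EXP + 1) = d) by (unfold e; field; lra).
  assert (He0 : 0 < e) by (unfold e; apply Rdiv_lt_0_compat; lra).
  assert (Hll : (lam - mu) * (lam - mu) <= e * e).
  { pose proof (Rabs_pos (lam - mu)).
    assert (Hq : Rabs (lam - mu) * Rabs (lam - mu) <= e * e) by (apply Rmult_le_compat; lra).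
    rewrite <- Rabs_mult, Rabs_right in Hq by (apply Rle_ge, Rle_0_sqr). exact Hq. }
  assert (H1 : (lam - mu) * (lam - mu) * EXP <= e * e * EXP) by (apply Rmult_le_compat_r; lra).
  assert (H2 : e * e * EXP < d * d).
  { rewrite <- He. assert (0 < e * e) by (apply Rmult_lt_0_compat; lra).
    assert (EXP < (EXP + 1) * (EXP + 1)) by nra.
    replace (e * (EXP + 1) * (e * (EXP + 1))) with (e * e * ((EXP + 1) * (EXP + 1))) by ring.
    apply Rmult_lt_compat_l; auto. }
  destruct (Rlt_le_dec (Rabs (U lam s - U mu s)) d) as [|Hge]; auto. exfalso.
  assert (d * d <= Rabs (U lam s - U mu s) * Rabs (U lam s - U mu s)) by (apply Rmult_le_compat; lra).
  rewrite <- Rabs_mult, Rabs_right in H0 by (apply Rle_ge, Rle_0_sqr). lra.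
Qed.

Lemma lam0_pos' : 0 < lam0.
Proof. exact (lam0_pos p h w0 dw0 Hh_pos Hw0 Hw00 Hw0pos). Qed.

Lemma Pos_lam0 : Pos lam0.
Proof. intros s Hs. rewrite <- w0_U. apply Hw0pos; lra. pose proof TT_c. lra. Qed.

Lemma U_ca_pt lam x : continuity_pt (U lam) x.
Proof. apply continuity_pt_filterlim, U_ca. Qed.

Lemma openness lam : lam0 <= lam -> Pos lam -> exists eps, 0 < eps /\ forall mu, lam <= mu <= lam + eps -> Pos mu.
Proof.
  intros Hl HP. pose proof lam0_pos'. pose proof MM_pos. pose proof TT_c.
  set (s0 := Rmin c (lam0 / (2 * MM))).
  assert (Hs0 : 0 < s0) by (apply Rmin_pos; [lra|apply Rdiv_lt_0_compat; lra]).
  assert (Hs0c : s0 <= c) by apply Rmin_l.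
  assert (Hs0M : MM * s0 <= lam0 / 2).
  { apply Rle_trans with (MM * (lam0 / (2 * MM))). apply Rmult_le_compat_l; [lra|apply Rmin_r].
    right. field. lra. }
  destruct (continuity_ab_min (U lam) s0 c Hs0c (fun x _ => U_ca_pt lam x)) as [smin [Hmin Hsmin]].
  assert (Hm0 : 0 < U lam smin) by (apply HP; lra).
  exists (U lam smin / (EXP + 1)). split.
  { apply Rdiv_lt_0_compat; auto. pose proof EXP_ge1; lra. }
  intros mu Hmu s Hs.
  destruct (Rle_dec s s0) as [Hss|Hss].
  - pose proof (U_ge mu s ltac:(unfold TT; lra)).
    assert (MM * s <= MM * s0) by (apply Rmult_le_compat_l; lra).
    assert (lam0 / 2 * s <= (mu - MM * s) * s) by (apply Rmult_le_compat_r; lra).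
    assert (0 < lam0 / 2 * s) by (apply Rmult_lt_0_compat; lra). lra.
  - pose proof (Hmin s ltac:(lra)).
    assert (Rabs (U lam s - U mu s) < U lam smin).
    { apply close_lt; auto. unfold TT; lra. rewrite Rabs_minus_sym, Rabs_right by lra. lra. }
    split_Rabs; lra.
Qed.

Lemma exists_sol : exists ls, lam0 < ls /\ ls <= LL /\ U ls c = 0 /\ (forall s, 0 < s < c -> 0 < U ls s).
Proof.
  pose proof lam0_pos'. pose proof MM_pos. pose proof TT_c. pose proof LL_ge as [HL1 _].
  set (S := fun lam => lam0 <= lam <= LL /\ forall mu, lam0 <= mu <= lam -> Pos mu).
  assert (Hb' : bound S) by (exists LL; intros x [Hx _]; lra).
  assert (Hne : exists x, S x) by (exists lam0; split; [lra|]; intros mu Hmu; replace mu with lam0 by lra; apply Pos_lam0).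
  destruct (completeness S Hb' Hne) as [ls [Hub Hlub]].
  assert (Hls0 : lam0 <= ls) by (apply Hub; split; [lra|]; intros mu Hmu; replace mu with lam0 by lra; apply Pos_lam0).
  assert (HlsL : ls <= LL) by (apply Hlub; intros x [Hx _]; lra).
  assert (Hbelow : forall mu, lam0 <= mu < ls -> Pos mu).
  { intros mu Hmu. destruct (classic (exists lam, S lam /\ mu < lam)) as [[lam [[_ Hl] Hml]]|Hn].
    - apply Hl; lra.
    - exfalso. assert (ls <= mu); [|lra]. apply Hlub. intros x Hx.
      apply Rnot_lt_le. intros Hc'. apply Hn. exists x; auto. }
  assert (Hnn : forall s, 0 < s <= c -> 0 <= U ls s).
  { intros s Hs. destruct (Req_dec ls lam0) as [->|Hne0].
    - left. apply Pos_lam0; auto.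
    - apply Rnot_lt_le. intros Hneg.
      set (d := - U ls s). assert (Hd : 0 < d) by (unfold d; lra).
      pose proof EXP_ge1.
      set (mu := Rmax lam0 (ls - d / (EXP + 1))).
      assert (Hdd : 0 < d / (EXP + 1)) by (apply Rdiv_lt_0_compat; lra).
      assert (Hmu1 : lam0 <= mu) by apply Rmax_l.
      assert (Hmu2 : ls - d / (EXP + 1) <= mu) by apply Rmax_r.
      assert (Hmu3 : mu < ls) by (unfold mu; apply Rmax_lub_lt; lra).
      pose proof (Hbelow mu ltac:(lra) s Hs).
      assert (Rabs (U ls s - U mu s) < d).
      { apply close_lt; auto. unfold TT; lra. rewrite Rabs_right by lra. lra. }
      unfold d in *. split_Rabs; lra. }
  assert (Hnot : ~ Pos ls).
  { intros HP. destruct (openness ls Hls0 HP) as [eps [Heps Hop]].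
    destruct (Rlt_le_dec ls LL) as [Hlt|Hge].
    - set (ls' := Rmin (ls + eps) LL).
      assert (HS' : S ls').
      { split. split; [unfold ls'; apply Rmin_glb; lra|apply Rmin_r].
        intros mu Hmu. destruct (Rlt_le_dec mu ls). apply Hbelow; lra.
        apply Hop. split; auto. pose proof (Rmin_l (ls + eps) LL) as Hm'. fold ls' in Hm'. lra. }
      pose proof (Hub ls' HS'). assert (ls < ls') by (unfold ls'; apply Rmin_glb_lt; lra). lra.
    - apply large. replace LL with ls by lra. exact HP. }
  assert (Hz : exists z, 0 < z <= c /\ U ls z <= 0).
  { destruct (classic (exists z, 0 < z <= c /\ U ls z <= 0)) as [|Hn]; auto.
    exfalso. apply Hnot. intros s Hs. apply Rnot_le_lt. intros Hle. apply Hn. exists s; auto. }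
  assert (Hint : forall z, 0 < z < c -> U ls z = 0 -> False).
  { intros z Hz0 Hzz.
    set (t := Rmin (z / 2) (ls / (2 * MM))).
    assert (Ht0 : 0 < t) by (apply Rmin_pos; apply Rdiv_lt_0_compat; lra).
    assert (Htz : t <= z / 2) by apply Rmin_l.
    assert (HtM : MM * t <= ls / 2).
    { apply Rle_trans with (MM * (ls / (2 * MM))). apply Rmult_le_compat_l; [lra|apply Rmin_r].
      right. field. lra. }
    pose proof (chord ls t z c ltac:(lra) ltac:(unfold TT; lra)) as Ch.
    pose proof (Hnn c ltac:(lra)). rewrite Hzz in Ch.
    assert (0 <= U ls c * (z - t)) by (apply Rmult_le_pos; lra).
    assert (U ls t <= 0) by nra.
    pose proof (U_ge ls t ltac:(unfold TT; lra)).
    assert (ls / 2 * t <= (ls - MM * t) * t) by (apply Rmult_le_compat_r; lra).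
    assert (0 < ls / 2 * t) by (apply Rmult_lt_0_compat; lra). lra. }
  destruct Hz as [z [Hz1 Hz2]].
  pose proof (Hnn z Hz1).
  assert (Hzc : z = c).
  { destruct (Req_dec z c); auto. exfalso. apply (Hint z); lra. }
  subst z.
  assert (Hc0 : U ls c = 0) by lra.
  exists ls. split; [|split; [exact HlsL|split; auto]].
  - destruct (Req_dec ls lam0) as [E|E]; [|lra]. exfalso.
    rewrite E in Hc0. pose proof (Pos_lam0 c ltac:(lra)). lra.
  - intros s Hs. pose proof (Hnn s ltac:(lra)). destruct (Req_dec (U ls s) 0) as [E|E].
    + exfalso. apply (Hint s); auto.
    + lra.
Qed.

Lemma main_c : exists w1 dw1 : R -> R,
      ode_sol p h (fun s => 0 <= s <= c) (fun s => 0 < s < c) w1 dw1 /\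
      w1 0 = 0 /\ w1 c = 0 /\
      (forall s, 0 < s < c -> 0 < w1 s) /\
      dw0 0 < dw1 0.
Proof.
  destruct exists_sol as [ls [Hls [HlsL [Hc0 Hpos]]]].
  pose proof TT_c. pose proof lam0_pos'. pose proof LL_ge as [HL1 _].
  exists (U ls), (dU ls). split; [split|].
  - intros s Hs. split; apply cont_within_full; [apply U_ca|apply dU_ca].
  - intros s Hs. split.
    + apply U_d. unfold TT; lra.
    + pose proof (dU_d ls s ltac:(unfold TT; lra)) as D.
      rewrite HH_h in D by (unfold TT; lra).
      rewrite GG_pnl in D; auto. split; [apply Hpos; auto|].
      pose proof (U_le ls s ltac:(unfold TT; lra)). unfold KK.
      assert (ls * s <= LL * TT) by (apply Rmult_le_compat; unfold TT; lra). lra.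
  - split; [apply U_0|]. split; auto. split; auto. rewrite dU_0. exact Hls.
Qed.

End Main.


Theorem lemma2p6 (p : R) (h : R -> R)
  (Hp : 1 < p)
  (Hh_cont : forall s, 0 <= s -> cont_within (fun x => 0 <= x) h s)
  (Hh_pos : forall s, 0 < s -> 0 < h s)
  (w0 dw0 : R -> R)
  (Hw0 : ode_sol p h (fun s => 0 <= s) (fun s => 0 < s) w0 dw0)
  (Hw00 : w0 0 = 0)
  (Hw0pos : forall s, 0 < s -> 0 < w0 s) :
  exists C : R, forall c : R, C < c -> 0 < c ->
    exists w1 dw1 : R -> R,
      ode_sol p h (fun s => 0 <= s <= c) (fun s => 0 < s < c) w1 dw1 /\
      w1 0 = 0 /\ w1 c = 0 /\
      (forall s, 0 < s < c -> 0 < w1 s) /\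
      dw0 0 < dw1 0.
Proof.
  exists 3. intros c Hc _.
  assert (HT : 0 < TT c) by (unfold TT; lra).
  destruct (continuity_ab_maj (HH h c) 0 (TT c) ltac:(lra)
     (fun x _ => proj2 (continuity_pt_filterlim _ _) (HH_ca h Hh_cont c Hc x))) as [Mx [HMx _]].
  destruct (continuity_ab_min h 1 2 ltac:(lra)
     (fun x Hx => proj2 (continuity_pt_filterlim _ _)
        (cont_within_interior h x ltac:(lra) (Hh_cont x ltac:(lra))))) as [xm [Hxm Hxm2]].
  apply (main_c p h w0 dw0 Hp Hh_cont Hh_pos Hw0 Hw00 Hw0pos c Hc (HH h c Mx) (h xm)).
  - intros x. split; [unfold HH; apply Rabs_pos|].
    assert (E : HH h c x = HH h c (clamp 0 (TT c) x)).
    { unfold HH. rewrite (clamp_id 0 (TT c) (clamp 0 (TT c) x)); auto. apply clamp_range; lra. }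
    rewrite E. apply HMx. apply clamp_range; lra.
  - apply Hh_pos. lra.
  - intros x Hx. apply Hxm; auto.
Qed.
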